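(* Let $\mathcal{H}$ be a complex Hilbert space. The inclusion map $\mathcal{P}(\mathcal{H})\hookrightarrow\mathcal{P}_{\mathbb{R}}(\mathcal{H})$, $P\mapsto P$, is an injective, completely additive homomorphism of involution lattices which is covariant with respect to the actions $P\mapsto UPU^*$ of the group $\mathrm{AU}(\mathcal{H})$ of all unitary and antiunitary operators on $\mathcal{H}$.
   Context: $\mathcal{P}(\mathcal{H})$ is the lattice of (complex linear) orthogonal projections with operator order, orthocomplement $P^\perp=1-P$, minimal/maximal elements $0,1$. $\mathcal{P}_{\mathbb{R}}(\mathcal{H})$ is the set of real orthogonal projections on $\mathcal{H}$ (real linear, selfadjoint with respect to $\mathrm{Re}\langle\cdot,\cdot\rangle$, idempotent), i.e. projections onto closed real linear subspaces; it is ordered by $E\le F\iff E\mathcal{H}\subset F\mathcal{H}$, has $0,1$, join = projection onto the closed real span, meet = projection onto the intersection, and involution $E'=1+iEi$ (the projection onto the symplectic complement $\{\xi:\mathrm{Im}\langle\xi,h\rangle=0\ \forall h\in E\mathcal{H}\}$). An involution lattice is a $\sigma$-complete bounded lattice with an order-reversing involution (not necessarily a complement); a homomorphism of involution lattices preserves $0$, $1$, the involution, and binary joins and meets. A map is completely additive if it maps the join of any (arbitrary) family of pairwise separated elements ($A\le B^{\text{involution}}$ for distinct $A,B$) to the join of the images. *)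

(* Defs.v *)
From HB Require Import structures.
From mathcomp Require Import all_boot all_order all_algebra.
From mathcomp Require Import complex reals.
Set Implicit Arguments. Unset Strict Implicit. Unset Printing Implicit Defensive.
Import Order.TTheory GRing.Theory Num.Theory.
Local Open Scope ring_scope.

Definition sqnorm (R : realType) (H : lmodType R[i]) (ip : H -> H -> R[i])
  (x : H) : R := complex.Re (ip x x).

Definition is_complex_hilbert (R : realType) (H : lmodType R[i])
    (ip : H -> H -> R[i]) : Prop :=
  (forall (a : R[i]) (x y z : H), ip (a *: x + y) z = a * ip x z + ip y z) /\
  (forall x y : H, ip x y = conjc (ip y x)) /\
  (forall x : H, 0 <= ip x x) /\
  (forall x : H, ip x x = 0 -> x = 0) /\
  (forall u : nat -> H,
     (forall e : R, 0 < e -> exists N : nat, forall m n : nat,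
        (N <= m)%N -> (N <= n)%N -> sqnorm ip (u m - u n) < e) ->
     exists l : H, forall e : R, 0 < e -> exists N : nat, forall n : nat,
        (N <= n)%N -> sqnorm ip (u n - l) < e).

Definition realC (R : realType) (r : R) : R[i] := Complex r 0.
Definition iC (R : realType) : R[i] := Complex 0 1.

Definition is_projC (R : realType) (H : lmodType R[i]) (ip : H -> H -> R[i])
    (P : H -> H) : Prop :=
  (forall (a : R[i]) (x y : H), P (a *: x + y) = a *: P x + P y) /\
  (forall x y : H, ip (P x) y = ip x (P y)) /\
  (forall x : H, P (P x) = P x).

Definition leC (R : realType) (H : lmodType R[i]) (ip : H -> H -> R[i])
    (P Q : H -> H) : Prop :=
  forall x : H, complex.Re (ip (P x) x) <= complex.Re (ip (Q x) x).

Definition perpC (R : realType) (H : lmodType R[i]) (P : H -> H) : H -> H :=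
  fun x => x - P x.

Definition is_projR (R : realType) (H : lmodType R[i]) (ip : H -> H -> R[i])
    (E : H -> H) : Prop :=
  (forall (r : R) (x y : H), E (realC r *: x + y) = realC r *: E x + E y) /\
  (forall x y : H, complex.Re (ip (E x) y) = complex.Re (ip x (E y))) /\
  (forall x : H, E (E x) = E x).

Definition leR (R : realType) (H : lmodType R[i]) (E F : H -> H) : Prop :=
  forall x : H, exists y : H, F y = E x.

Definition invR (R : realType) (H : lmodType R[i]) (E : H -> H) : H -> H :=
  fun x => x + iC R *: E (iC R *: x).

Definition is_joinC (R : realType) (H : lmodType R[i]) (ip : H -> H -> R[i])
    (S : (H -> H) -> Prop) (J : H -> H) : Prop :=
  is_projC ip J /\ (forall P, S P -> leC ip P J) /\
  (forall Q, is_projC ip Q -> (forall P, S P -> leC ip P Q) -> leC ip J Q).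

Definition is_meetC (R : realType) (H : lmodType R[i]) (ip : H -> H -> R[i])
    (S : (H -> H) -> Prop) (M : H -> H) : Prop :=
  is_projC ip M /\ (forall P, S P -> leC ip M P) /\
  (forall Q, is_projC ip Q -> (forall P, S P -> leC ip Q P) -> leC ip Q M).

Definition is_joinR (R : realType) (H : lmodType R[i]) (ip : H -> H -> R[i])
    (S : (H -> H) -> Prop) (J : H -> H) : Prop :=
  is_projR ip J /\ (forall E, S E -> leR E J) /\
  (forall F, is_projR ip F -> (forall E, S E -> leR E F) -> leR J F).

Definition is_meetR (R : realType) (H : lmodType R[i]) (ip : H -> H -> R[i])
    (S : (H -> H) -> Prop) (M : H -> H) : Prop :=
  is_projR ip M /\ (forall E, S E -> leR M E) /\
  (forall F, is_projR ip F -> (forall E, S E -> leR F E) -> leR F M).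

Definition pair_set (T : Type) (a b : T) : T -> Prop := fun x => x = a \/ x = b.
Definition range_set (I T : Type) (f : I -> T) : T -> Prop :=
  fun x => exists i, f i = x.

Definition is_unitary (R : realType) (H : lmodType R[i]) (ip : H -> H -> R[i])
    (U : H -> H) : Prop :=
  (forall (a : R[i]) (x y : H), U (a *: x + y) = a *: U x + U y) /\
  (forall x y : H, ip (U x) (U y) = ip x y) /\
  (forall y : H, exists x, U x = y).

Definition is_antiunitary (R : realType) (H : lmodType R[i])
    (ip : H -> H -> R[i]) (U : H -> H) : Prop :=
  (forall (a : R[i]) (x y : H), U (a *: x + y) = conjc a *: U x + U y) /\
  (forall x y : H, ip (U x) (U y) = conjc (ip x y)) /\
  (forall y : H, exists x, U x = y).

Definition is_AU (R : realType) (H : lmodType R[i]) (ip : H -> H -> R[i])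
    (U : H -> H) : Prop := is_unitary ip U \/ is_antiunitary ip U.

Definition inclusion (R : realType) (H : lmodType R[i]) (P : H -> H) : H -> H := P.

(* Main.v *)
Require Import Defs.
From HB Require Import structures.
From mathcomp Require Import all_boot all_order all_algebra.
From mathcomp Require Import complex reals.
From mathcomp Require Import ring lra.
From Stdlib Require Import FunctionalExtensionality.
Import Order.TTheory GRing.Theory Num.Theory.
Local Open Scope ring_scope.

Lemma ReD {R : realType} (a b : R[i]) : complex.Re (a + b) = complex.Re a + complex.Re b.
Proof. by case: a; case: b. Qed.
Lemma ReN {R : realType} (a : R[i]) : complex.Re (- a) = - complex.Re a.
Proof. by case: a. Qed.
Lemma ReB {R : realType} (a b : R[i]) : complex.Re (a - b) = complex.Re a - complex.Re b.
Proof. by rewrite ReD ReN. Qed.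
Lemma ReJ {R : realType} (a : R[i]) : complex.Re (conjc a) = complex.Re a.
Proof. by case: a. Qed.
Lemma iCi {R : realType} : iC R * iC R = -1.
Proof. apply/eqP; rewrite eq_complex /=. by rewrite !(mul0r, mulr0, mulr1, sub0r, addr0, oppr0) !eqxx. Qed.
Lemma ge0P {R : realType} {a : R[i]} : 0 <= a -> complex.Im a = 0 /\ 0 <= complex.Re a.
Proof. rewrite lecE => /andP[/eqP h1 h2]; by split. Qed.
Lemma mulswap {R : realType} (a b N : R[i]) : (a / N) * b = (b / N) * a.
Proof. by rewrite mulrAC [RHS]mulrAC [a * b]mulrC. Qed.

Lemma conjD {R : realType} (a b : R[i]) : conjc (a + b) = conjc a + conjc b.
Proof. exact: rmorphD. Qed.
Lemma conjM {R : realType} (a b : R[i]) : conjc (a * b) = conjc a * conjc b.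
Proof. exact: rmorphM. Qed.
Lemma conjN {R : realType} (a : R[i]) : conjc (- a) = - conjc a.
Proof. exact: rmorphN. Qed.

Section Hilb.
Context {R : realType} {H : lmodType R[i]} {ip : H -> H -> R[i]}.
Context (hH : is_complex_hilbert ip).

Lemma hlin a x y z : ip (a *: x + y) z = a * ip x z + ip y z.
Proof. by case: hH. Qed.
Lemma hherm x y : ip x y = conjc (ip y x).
Proof. by case: hH => _ [h _]. Qed.
Lemma hpos x : 0 <= ip x x.
Proof. by case: hH => _ [_ [h _]]. Qed.
Lemma hdef x : ip x x = 0 -> x = 0.
Proof. by case: hH => _ [_ [_ [h _]]]; apply: h. Qed.

Lemma ip0l z : ip 0 z = 0.
Proof.
have := hlin 1 0 0 z; rewrite scale1r addr0 mul1r => /(congr1 (fun t => t - ip 0 z)).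
by rewrite subrr addrK.
Qed.
Lemma ipDl x y z : ip (x + y) z = ip x z + ip y z.
Proof. by have := hlin 1 x y z; rewrite scale1r mul1r. Qed.
Lemma ipZl a x z : ip (a *: x) z = a * ip x z.
Proof. by have := hlin a x 0 z; rewrite addr0 ip0l addr0. Qed.
Lemma ipNl x z : ip (- x) z = - ip x z.
Proof. by rewrite -scaleN1r ipZl mulN1r. Qed.
Lemma ipBl x y z : ip (x - y) z = ip x z - ip y z.
Proof. by rewrite ipDl ipNl. Qed.
Lemma ipDr x y z : ip x (y + z) = ip x y + ip x z.
Proof. by rewrite hherm ipDl conjD -!hherm. Qed.
Lemma ipZr a x y : ip x (a *: y) = conjc a * ip x y.
Proof. by rewrite hherm ipZl conjM -hherm. Qed.
Lemma ipNr x y : ip x (- y) = - ip x y.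
Proof. by rewrite hherm ipNl conjN -hherm. Qed.
Lemma ipBr x y z : ip x (y - z) = ip x y - ip x z.
Proof. by rewrite ipDr ipNr. Qed.
Lemma ReC x y : complex.Re (ip x y) = complex.Re (ip y x).
Proof. by rewrite hherm ReJ. Qed.
Lemma Re_ge0 x : 0 <= complex.Re (ip x x).
Proof. by have [] := ge0P (hpos x). Qed.
Lemma ipxx_eq0 x : complex.Re (ip x x) <= 0 -> x = 0.
Proof.
move=> hle; have [h1 h2] := ge0P (hpos x); apply: hdef.
have e : complex.Re (ip x x) = 0 by apply/le_anti; rewrite hle h2.
by apply/eqP; rewrite eq_complex h1 e /= !eqxx.
Qed.


Section Proj.
Variable P : H -> H.
Hypothesis hP : is_projC ip P.

Lemma PL a x y : P (a *: x + y) = a *: P x + P y.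
Proof. by case: hP. Qed.
Lemma Psa x y : ip (P x) y = ip x (P y).
Proof. by case: hP => _ [h _]. Qed.
Lemma Pid x : P (P x) = P x.
Proof. by case: hP => _ [_ h]. Qed.
Lemma P0 : P 0 = 0.
Proof.
have := PL 1 0 0; rewrite !scale1r addr0 => /(congr1 (fun t => t - P 0)).
by rewrite subrr addrK.
Qed.
Lemma PD x y : P (x + y) = P x + P y.
Proof. by have := PL 1 x y; rewrite !scale1r. Qed.
Lemma PZ a x : P (a *: x) = a *: P x.
Proof. by have := PL a x 0; rewrite !addr0 P0 addr0. Qed.
Lemma PB x y : P (x - y) = P x - P y.
Proof. by rewrite PD -scaleN1r PZ scaleN1r. Qed.
Lemma Pxx x : ip (P x) x = ip (P x) (P x).
Proof. by rewrite -{1}(Pid x) Psa. Qed.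
Lemma Pyth x : ip x x = ip (P x) (P x) + ip (x - P x) (x - P x).
Proof.
rewrite !(ipBl, ipBr) [ip x (P x)]hherm Pxx -hherm.
by rewrite subrr subr0 addrC subrK.
Qed.
Lemma Ple x : complex.Re (ip (P x) (P x)) <= complex.Re (ip x x).
Proof. by rewrite [X in _ <= complex.Re X]Pyth ReD lerDl Re_ge0. Qed.
Lemma perp_proj : is_projC ip (perpC P).
Proof.
split; [|split] => [a x y|x y|x]; rewrite /perpC.
- by rewrite PD PZ scalerBr opprD addrACA.
- by rewrite ipBl ipBr Psa.
- by rewrite PB Pid subrr subr0.
Qed.
Lemma C2R : is_projR ip P.
Proof.
split; [|split] => [r x y|x y|x]; first exact: PL.
- by rewrite Psa.
- exact: Pid.
Qed.
End Proj.

Lemma LE_range P J : is_projC ip P -> is_projC ip J -> leC ip P J ->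
  forall x, J (P x) = P x.
Proof.
move=> hP hJ hle x; set v := P x.
have hv : P v = v by rewrite /v Pid.
suff : v - J v = 0 by move/eqP; rewrite subr_eq0 => /eqP.
apply: ipxx_eq0.
have h1 := hle v; rewrite hv Pxx // in h1.
have h2 := Pyth J hJ v; have := congr1 (@complex.Re R) h2; rewrite ReD => h3.
lra.
Qed.

Lemma LeC_of P Q : is_projC ip P -> is_projC ip Q -> (forall z, P (Q z) = P z) ->
  leC ip P Q.
Proof.
move=> hP hQ hPQ z.
rewrite Pxx // -hPQ (Pxx Q hQ).
exact: Ple.
Qed.

Definition Ey (y z : H) : H := (ip z y / ip y y) *: y.

Lemma Ey_proj y : y <> 0 -> is_projC ip (Ey y).
Proof.
move=> hy; have hN : ip y y != 0 by apply/eqP => h; apply: hy; exact: hdef.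
split; [|split] => [a x z|x z|x]; rewrite /Ey.
- by rewrite ipDl ipZl mulrDl scalerDl scalerA mulrA.
- rewrite ipZl ipZr conjM conjc_inv -!hherm; exact: mulswap.
- by rewrite ipZl mulfK.
Qed.
Lemma Ey_self y : y <> 0 -> Ey y y = y.
Proof.
move=> hy; have hN : ip y y != 0 by apply/eqP => h; apply: hy; exact: hdef.
by rewrite /Ey divff // scale1r.
Qed.
Lemma Ey_zero y x : y <> 0 -> Ey y x = 0 -> ip x y = 0.
Proof.
move=> hy; rewrite /Ey => /eqP; rewrite scaler_eq0 => /orP[|/eqP //].
by rewrite mulf_eq0 invr_eq0 => /orP[/eqP|/eqP /hdef] //.
Qed.

Lemma projR_orth F x u : is_projR ip F ->
  complex.Re (ip (x - F x) (F u)) = 0.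
Proof.
case=> _ [hsa hid].
by rewrite ipBl ReB -[complex.Re (ip (F x) (F u))]hsa hid -hsa subrr.
Qed.

End Hilb.

Section Hilb2.
Context {R : realType} {H : lmodType R[i]} {ip : H -> H -> R[i]}.
Context (hH : is_complex_hilbert ip).

Lemma join_gen (S : (H -> H) -> Prop) J : (forall P, S P -> is_projC ip P) ->
  is_joinC ip S J -> is_joinR ip S J.
Proof.
move=> hS [hJ [hub hlub]].
split; [exact: C2R | split].
- move=> E hE x; exists (E x); exact: (LE_range hH _ _ (hS E hE) hJ (hub E hE)).
move=> F hF hFub x0; exists (J x0); set x := J x0.
have hFid : forall z, F (F z) = F z by case: hF => _ [].
apply/eqP; apply/negPn/negP => hne.
set y := x - F x.
have hy : y <> 0 by move/eqP; rewrite subr_eq0 eq_sym (negbTE hne).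
have hEy := Ey_proj hH _ hy.
have hQ := perp_proj hH _ hEy.
have hPy : forall P, S P -> P y = 0.
  move=> P hP; have hPp := hS P hP.
  have [z hz] := hFub P hP y.
  have hFP : F (P y) = P y by rewrite -hz hFid.
  apply: (ipxx_eq0 hH).
  by rewrite (Psa _ hPp) (Pid _ hPp) -hFP /y (projR_orth hH _ _ _ hF).
have hle : forall P, S P -> leC ip P (perpC (Ey (ip:=ip) y)).
  move=> P hP; apply: (LeC_of hH _ _ (hS P hP) hQ) => z.
  by rewrite /perpC /Ey (PB _ (hS P hP)) (PZ _ (hS P hP)) hPy // scaler0 subr0.
have := LE_range hH _ _ hJ hQ (hlub _ hQ hle) x0.
rewrite -/x /perpC => /eqP; rewrite subr_eq addrC -subr_eq subrr eq_sym => /eqP h0.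
have hxy := Ey_zero hH _ _ hy h0.
apply: hy; apply: (ipxx_eq0 hH).
have e1 : complex.Re (ip y y) = complex.Re (ip x y) - complex.Re (ip (F x) y).
  by rewrite -ReB -ipBl.
have e2 : complex.Re (ip (F x) y) = 0 by rewrite (ReC hH) (projR_orth hH _ _ _ hF).
by rewrite e1 e2 hxy subr0.
Qed.

Lemma meet_gen (S : (H -> H) -> Prop) M : (forall P, S P -> is_projC ip P) ->
  is_meetC ip S M -> is_meetR ip S M.
Proof.
move=> hS [hM [hlb hglb]].
split; [exact: C2R | split].
- move=> E hE x; exists (M x); exact: (LE_range hH _ _ hM (hS E hE) (hlb E hE)).
move=> F hF hFlb x; exists (F x); set v := F x.
case: (eqVneq v 0) => [->|hv0]; first exact: (P0 _ hM).
have hv : v <> 0 by apply/eqP.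
have hE := Ey_proj hH _ hv.
have hle : forall P, S P -> leC ip (Ey (ip:=ip) v) P.
  move=> P hP; have hPp := hS P hP.
  have [z hz] := hFlb P hP x.
  have hPv : P v = v by rewrite /v -hz (Pid _ hPp).
  apply: (LeC_of hH _ _ hE hPp) => w.
  by rewrite /Ey (Psa _ hPp) hPv.
have := LE_range hH _ _ hE hM (hglb _ hE hle) v.
by rewrite (Ey_self hH _ hv).
Qed.

Lemma cov (s : R[i] -> R[i]) (hs : involutive s)
  (hsr : forall r, s (realC r) = realC r)
  (hsRe : forall c, complex.Re (s c) = complex.Re c)
  (U Ustar : H -> H)
  (hUl : forall a x y, U (a *: x + y) = s a *: U x + U y)
  (hUip : forall x y, ip (U x) (U y) = s (ip x y))
  (c1 : cancel U Ustar) (c2 : cancel Ustar U) :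
     (forall P, is_projC ip P -> is_projC ip (U \o P \o Ustar)) /\
     (forall E, is_projR ip E -> is_projR ip (U \o E \o Ustar)) /\
     (forall P, is_projC ip P ->
        inclusion (U \o P \o Ustar) = U \o inclusion P \o Ustar).
Proof.
have hUs : forall a x y, Ustar (a *: x + y) = s a *: Ustar x + Ustar y.
  move=> a x y; apply: (can_inj c1).
  by rewrite c2 hUl hs !c2.
split; [|split]; last by [].
- move=> P [PL [Psa Pid]].
  split; [|split] => [a x y|x y|x] /=.
  + by rewrite hUs PL hUl hs.
  + by rewrite -{1}(c2 y) hUip Psa -hUip c2.
  + by rewrite c1 Pid.
- move=> E [EL [Esa Eid]].
  split; [|split] => [r x y|x y|x] /=.
  + by rewrite hUs hsr EL hUl hsr.
  + by rewrite -{1}(c2 y) hUip hsRe Esa -hsRe -hUip c2.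
  + by rewrite c1 Eid.
Qed.

End Hilb2.

Theorem lemma2p10 (R : realType) (H : lmodType R[i]) (ip : H -> H -> R[i])
    (hH : is_complex_hilbert ip) :
  (* well defined: P(H) is mapped into P_R(H) *)
  (forall P, is_projC ip P -> is_projR ip (inclusion P)) /\
  (* injective *)
  (forall P Q, is_projC ip P -> is_projC ip Q ->
     inclusion P = inclusion Q -> P = Q) /\
  (* preserves 0 and 1 *)
  inclusion (fun _ : H => 0) = (fun _ : H => 0) /\
  inclusion (fun x : H => x) = (fun x : H => x) /\
  (* preserves the involution *)
  (forall P, is_projC ip P -> inclusion (perpC P) = invR (inclusion P)) /\
  (* preserves binary joins and meets *)
  (forall P Q J, is_projC ip P -> is_projC ip Q ->
     is_joinC ip (pair_set P Q) J ->
     is_joinR ip (pair_set (inclusion P) (inclusion Q)) (inclusion J)) /\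
  (forall P Q M, is_projC ip P -> is_projC ip Q ->
     is_meetC ip (pair_set P Q) M ->
     is_meetR ip (pair_set (inclusion P) (inclusion Q)) (inclusion M)) /\
  (* completely additive *)
  (forall (I : Type) (f : I -> H -> H) (J : H -> H),
     (forall i, is_projC ip (f i)) ->
     (forall i j, i <> j -> leC ip (f i) (perpC (f j))) ->
     is_joinC ip (range_set f) J ->
     is_joinR ip (range_set (fun i => inclusion (f i))) (inclusion J)) /\
  (* covariant w.r.t. the actions P |-> U P U^* of AU(H) *)
  (forall U Ustar : H -> H, is_AU ip U ->
     cancel U Ustar -> cancel Ustar U ->
     (forall P, is_projC ip P -> is_projC ip (U \o P \o Ustar)) /\
     (forall E, is_projR ip E -> is_projR ip (U \o E \o Ustar)) /\
     (forall P, is_projC ip P ->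
        inclusion (U \o P \o Ustar) = U \o inclusion P \o Ustar)).
Proof.
split; first by move=> P hP; exact: C2R _ hP.
split; first by move=> P Q _ _.
split; first by [].
split; first by [].
split.
  move=> P hP; apply: functional_extensionality => x.
  by rewrite /inclusion /perpC /invR (PZ _ hP) scalerA iCi scaleN1r.
split.
  move=> P Q J hP hQ hJ; apply: (join_gen hH) hJ => E [->|->] //.
split.
  move=> P Q M hP hQ hM; apply: (meet_gen hH) hM => E [->|->] //.
split.
  move=> I f J hf _ hJ; apply: (join_gen hH) hJ => E [i <-] //.
move=> U Us [[hUl [hUip _]]|[hUl [hUip _]]] c1 c2.
- exact: (cov (fun a => a) (fun a => erefl) (fun r => erefl) (fun c => erefl) U Us hUl hUip c1 c2).
- have hr : forall r : R, conjc (realC r) = realC r by move=> r; rewrite /realC /= oppr0.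
  exact: (cov conjc (@conjcK R) hr (@ReJ R) U Us hUl hUip c1 c2).
Qed.
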